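(* Let $G$ be a graph with $n$ vertices. Then \[\chi(G) \leq \frac{1}{2} \left(\omega(G) + \frac{\Delta(G) + 1 + n}{2} \right) - \frac{\eta(G)}{4}.\]
   Context: All graphs are finite and simple with non-empty vertex set. $\chi$ is the chromatic number, $\omega$ the clique number, $\Delta$ the maximum degree. The chromatic excess of $G$ is $\eta(G) = \max_{H} \left(|H| - 3\chi(H)\right)$, where the maximum ranges over all induced subgraphs $H$ of $G$ with non-empty vertex set and $|H|$ is the number of vertices of $H$. *)

(* Defs.v *)
From mathcomp Require Import all_boot all_order all_algebra.
Set Implicit Arguments. Unset Strict Implicit. Unset Printing Implicit Defensive.
Import GRing.Theory Num.Theory.

(* A finite simple graph: vertex type T : finType, adjacency e : rel T,
   symmetric and irreflexive (hypotheses stated in the theorem). *)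

Section Graph.
Variables (T : finType) (e : rel T).

Definition colorable_on (S : {set T}) (k : nat) : bool :=
  [exists f : {ffun T -> 'I_#|T|},
     [forall x in S, f x < k] &&
     [forall x in S, forall y in S, e x y ==> (f x != f y)]].

(* chromatic number of G[S]; #|T| colours always suffice, so this is the
   least k <= #|T| such that G[S] is k-colourable *)
Definition chi_on (S : {set T}) : nat :=
  \big[minn/#|T|]_(k < #|T|.+1 | colorable_on S k) (k : nat).

Definition chi : nat := chi_on setT.

Definition is_clique (K : {set T}) : bool :=
  [forall x in K, forall y in K, (x != y) ==> e x y].

Definition omega : nat := \max_(K : {set T} | is_clique K) #|K|.

Definition deg (x : T) : nat := #|[set y | e x y]|.

Definition Delta : nat := \max_(x : T) deg x.

Definition eta : int :=
  (\big[Order.max/(#|T|%:Z - 3 * (chi_on setT)%:Z)]_(S : {set T} | S != set0)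
     (#|S|%:Z - 3 * (chi_on S)%:Z))%R.

End Graph.

(* Main.v *)
Require Import Defs.
From mathcomp Require Import all_boot all_order all_algebra.
From mathcomp Require Import zify.
From mathcomp Require Import ring lra.
Import GRing.Theory Num.Theory.
Set Implicit Arguments. Unset Strict Implicit. Unset Printing Implicit Defensive.

Section Orbit.
Variables (T : finType) (f g : T -> T).
Hypotheses (hf : involutive f) (hg : involutive g).

Definition rho x := f (g x).

Lemma rho_inj : injective rho.
Proof. move=> x y; rewrite /rho => /(can_inj hf) /(can_inj hg). done. Qed.

Lemma rho_f i x0 : f x0 = x0 -> iter i rho (f (iter i rho x0)) = x0.
Proof.
move=> fx0; elim: i => [|i IH]; first by [].
have e1 : forall y, rho (f (rho y)) = f y by move=> y; rewrite /rho hf hg.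
by rewrite [X in f X]iterS iterSr e1.
Qed.

Lemma rho_g i x0 : f x0 = x0 -> iter i.+1 rho (g (iter i rho x0)) = x0.
Proof.
move=> fx0; elim: i => [|i IH]; first by rewrite /= /rho hg.
have e1 : forall y, rho (g (rho y)) = g y by move=> y; rewrite /rho hg hf.
by rewrite [X in g X]iterS iterSr e1.
Qed.

Lemma orbit_f x0 y : f x0 = x0 -> fconnect rho x0 y -> fconnect rho x0 (f y).
Proof.
move=> fx0 hy; rewrite (fconnect_sym rho_inj).
have := rho_f (findex rho x0 y) fx0; rewrite (iter_findex hy) => h.
by rewrite -h fconnect_iter.
Qed.

Lemma orbit_g x0 y : f x0 = x0 -> fconnect rho x0 y -> fconnect rho x0 (g y).
Proof.
move=> fx0 hy; rewrite (fconnect_sym rho_inj).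
have := rho_g (findex rho x0 y) fx0; rewrite (iter_findex hy) => h.
by rewrite -h fconnect_iter.
Qed.

Lemma iter_mul q x : iter (q * order rho x) rho x = x.
Proof.
elim: q => [|q IH] //; by rewrite mulSn iterD IH (iter_order rho_inj).
Qed.

Lemma iter_dvd m x : iter m rho x = x -> order rho x %| m.
Proof.
move=> h; rewrite /dvdn; apply/eqP.
have hm : m = m %/ order rho x * order rho x + m %% order rho x by rewrite -divn_eq.
move: h; rewrite {1}hm addnC iterD iter_mul => h.
have := findex_iter (ltn_pmod m (order_gt0 rho x)); rewrite h.
by rewrite findex0 => <-.
Qed.

Lemma orbit_two x0 y z : f x0 = x0 -> fconnect rho x0 y -> fconnect rho x0 z ->
  y != x0 -> z != x0 -> (f y = y \/ g y = y) -> (f z = z \/ g z = z) -> y = z.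
Proof.
move=> fx0 hy hz yx zx ey ez.
set L := order rho x0.
have key : forall w, fconnect rho x0 w -> w != x0 -> (f w = w \/ g w = w) ->
    findex rho x0 w = L./2.
  move=> w hw wx ew; set i := findex rho x0 w.
  have iL : i < L := findex_max hw.
  have i0 : i != 0 by rewrite findex_eq0 eq_sym.
  have hiw := iter_findex hw; rewrite -/i in hiw.
  case: ew => ew.
  - have := rho_f i fx0; rewrite hiw ew -hiw -iterD => /iter_dvd /dvdnP [k hk].
    have : k = 1 by nia.
    move=> k1; rewrite k1 mul1n in hk; rewrite /L -hk; lia.
  - have := rho_g i fx0; rewrite hiw ew -hiw -iterD => /iter_dvd /dvdnP [k hk].
    have : k = 1 by nia.
    move=> k1; rewrite k1 mul1n in hk; rewrite /L -hk; lia.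
have := key y hy yx ey; rewrite -(key z hz zx ez) => h.
by rewrite -(iter_findex hy) h (iter_findex hz).
Qed.

End Orbit.


Section Matching.
Variables (T : finType) (a : rel T).
Hypothesis a_sym : symmetric a.
Hypothesis a_irr : irreflexive a.

Definition matching (S : {set T}) (f : {ffun T -> T}) : bool :=
  [forall x, f (f x) == x] && [forall x, (f x != x) ==> (x \in S) && a x (f x)].
Definition exposed (S : {set T}) (f : {ffun T -> T}) := [set x in S | f x == x].
Definition ucnt (S : {set T}) (f : {ffun T -> T}) := #|exposed S f|.
Definition maxm (S : {set T}) (f : {ffun T -> T}) :=
  matching S f && [forall g : {ffun T -> T}, matching S g ==> (ucnt S f <= ucnt S g)].

Section Basic.
Variables (S : {set T}) (f : {ffun T -> T}).
Hypothesis hf : matching S f.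

Lemma m_inv x : f (f x) = x.
Proof. by case/andP: hf => /forallP /(_ x) /eqP. Qed.

Lemma m_cov x : f x != x -> (x \in S) && a x (f x).
Proof. by case/andP: hf => _ /forallP /(_ x) /implyP. Qed.

Lemma m_in x : f x != x -> x \in S.
Proof. by move/m_cov/andP => []. Qed.

Lemma m_adj x : f x != x -> a x (f x).
Proof. by move/m_cov/andP => []. Qed.

Lemma m_inS x : f x != x -> f x \in S.
Proof.
move=> h; apply: (@m_in (f x)); rewrite m_inv; apply: contra h => /eqP h'.
by rewrite -h'.
Qed.

Lemma m_out x : x \notin S -> f x = x.
Proof. by move=> h; apply/eqP; apply: contraR h => /m_in. Qed.

Lemma m_injf : injective f.
Proof. by move=> x y h; rewrite -(m_inv x) h m_inv. Qed.

Lemma m_fS x : x \in S -> f x \in S.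
Proof. by move=> xS; case: (eqVneq (f x) x) => [->|/m_inS]. Qed.

Lemma m_sub (S' : {set T}) : S \subset S' -> matching S' f.
Proof.
move=> sub; apply/andP; split; first by apply/forallP => x; rewrite m_inv.
apply/forallP => x; apply/implyP => h; rewrite m_adj // andbT.
exact: (subsetP sub _ (m_in h)).
Qed.

End Basic.

Lemma id_matching S : matching S [ffun x => x].
Proof.
apply/andP; split; apply/forallP => x; rewrite !ffunE //.
by rewrite eqxx.
Qed.

Lemma exists_max S : exists f, maxm S f.
Proof.
have := id_matching S.
case: (arg_minnP (ucnt S) (id_matching S)) => f hf hmin _.
exists f; rewrite /maxm hf /=; apply/forallP => g; apply/implyP; exact: hmin.
Qed.

Lemma maxm_m S f : maxm S f -> matching S f.
Proof. by case/andP. Qed.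

Lemma maxm_le S f g : maxm S f -> matching S g -> ucnt S f <= ucnt S g.
Proof. by case/andP => _ /forallP /(_ g) /implyP. Qed.


Definition prep (S : {set T}) (f : {ffun T -> T}) :=
  [set x in S | (f x != x) && (enum_rank x < enum_rank (f x))].

Lemma count_pairs S f : matching S f -> #|S| = ucnt S f + 2 * #|prep S f|.
Proof.
move=> hf.
set C := [set x in S | f x != x].
have hSC : #|S| = ucnt S f + #|C|.
  rewrite /ucnt /exposed /C -(cardsID [set x | f x == x] S); congr (_ + _).
  - by apply: eq_card => x; rewrite !inE andbC.
  - by apply: eq_card => x; rewrite !inE andbC.
set R2 := [set x in S | (f x != x) && (enum_rank (f x) < enum_rank x)].
have hC : #|C| = #|prep S f| + #|R2|.
  rewrite -(cardsID (prep S f) C); congr (_ + _); apply: eq_card => x;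
    rewrite !inE.
  - by case: (x \in S); case: (f x != x) => //=; rewrite ?andbF.
  - case xS: (x \in S) => //=; case fx: (f x != x) => //=.
    have hne : enum_rank x != enum_rank (f x).
      by apply/negP => /eqP /enum_rank_inj h; rewrite -h eqxx in fx.
    by rewrite andbT -leqNgt leq_eqVlt val_eqE eq_sym (negbTE hne).
have hR2 : #|R2| = #|prep S f|.
  rewrite -(card_imset _ (m_injf hf)); apply: eq_card => x.
  apply/imsetP/idP.
  - move=> [y]; rewrite !inE => /and3P [yS fy lt] ->.
    rewrite (m_inv hf) lt andbT (m_inS hf fy) /=.
    by rewrite eq_sym.
  - rewrite !inE => /and3P [xS fx lt].
    exists (f x); last by rewrite (m_inv hf).
    rewrite !inE (m_inv hf) lt andbT (m_inS hf fx) /=.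
    by rewrite eq_sym.
by rewrite hSC hC hR2 addnn -mul2n.
Qed.

Lemma parity S f : matching S f -> odd (ucnt S f) = odd #|S|.
Proof.
move=> hf; rewrite (count_pairs hf) oddD.
by rewrite mul2n odd_double addbF.
Qed.

Lemma color_of_matching S f : matching S f ->
  exists c : T -> nat,
    (forall x, x \in S -> c x < ucnt S f + #|prep S f|) /\
    (forall x y, x \in S -> y \in S -> c x = c y -> x = y \/ y = f x).
Proof.
move=> hf.
set R := exposed S f :|: prep S f.
have hR : #|R| = ucnt S f + #|prep S f|.
  rewrite cardsU; suff -> : exposed S f :&: prep S f = set0 by rewrite cards0 subn0.
  apply/setP => x; rewrite !inE.
  by case: (f x == x) => //=; rewrite !andbF.
pose r x := if x \in R then x else f x.
have rR : forall x, x \in S -> r x \in R.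
  move=> x xS; rewrite /r; case: ifP => // xR.
  have fx : f x != x.
    by apply/negP => /eqP h; move: xR; rewrite !inE xS h eqxx.
  have nlt : ~~ (enum_rank x < enum_rank (f x)).
    by apply/negP => h; move: xR; rewrite !inE xS fx h /= orbT.
  have hne : enum_rank x != enum_rank (f x).
    by apply/negP => /eqP /enum_rank_inj h; rewrite -h eqxx in fx.
  have fx2 : f (f x) != f x by rewrite (m_inv hf) eq_sym.
  rewrite !inE (m_inS hf fx) (m_inv hf) eq_sym fx /=.
  move: nlt; rewrite -leqNgt leq_eqVlt val_eqE eq_sym.
  by rewrite (negbTE hne) (negbTE fx).
exists (fun x => index (r x) (enum R)); split.
- by move=> x xS; rewrite -hR cardE index_mem mem_enum rR.
- move=> x y xS yS h.
  have : r x = r y.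
    have := congr1 (nth x (enum R)) h.
    by rewrite !nth_index ?mem_enum ?rR.
  rewrite /r; case: ifP => xR; case: ifP => yR.
  + by left.
  + by move=> ->; right; rewrite (m_inv hf).
  + by move=> <-; right.
  + by move/(m_injf hf) ->; left.
Qed.

Lemma augment S f x y : matching S f -> x \in S -> y \in S -> x != y ->
  f x = x -> f y = y -> a x y ->
  exists g, matching S g /\ ucnt S g + 2 = ucnt S f.
Proof.
move=> hf xS yS xy fx fy axy.
pose g := [ffun z => if z == x then y else if z == y then x else f z].
have yx : (y == x) = false by apply/negbTE; rewrite eq_sym.
have gE : forall z, z != x -> z != y -> g z = f z.
  by move=> z zx zy; rewrite ffunE (negbTE zx) (negbTE zy).
have fzx : forall z, z != x -> f z != x.
  by move=> z zx; apply: contra zx => /eqP h; rewrite -(m_inv hf z) h fx.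
have fzy : forall z, z != y -> f z != y.
  by move=> z zy; apply: contra zy => /eqP h; rewrite -(m_inv hf z) h fy.
have hg : matching S g.
  apply/andP; split; apply/forallP => z.
  - case: (eqVneq z x) => [->|zx].
      by rewrite !ffunE eqxx yx eqxx.
    case: (eqVneq z y) => [->|zy].
      by rewrite !ffunE yx eqxx eqxx.
    by rewrite (gE _ zx zy) (gE _ (fzx _ zx) (fzy _ zy)) (m_inv hf).
  - apply/implyP => hz.
    case: (eqVneq z x) => [->|zx]; first by rewrite ffunE eqxx xS axy.
    case: (eqVneq z y) => [->|zy]; first by rewrite ffunE yx eqxx yS a_sym.
    rewrite (gE _ zx zy) in hz *; exact: m_cov hf _ hz.
exists g; split => //; rewrite /ucnt.
have -> : exposed S g = exposed S f :\: [set x; y].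
  apply/setP => z; rewrite !inE.
  case: (eqVneq z x) => [->|zx]; first by rewrite ffunE eqxx eq_sym (negbTE xy) /= andbF.
  case: (eqVneq z y) => [->|zy]; first by rewrite ffunE yx eqxx (negbTE xy) /= andbF.
  by rewrite (gE _ zx zy) /= andbC.
rewrite cardsD.
have -> : exposed S f :&: [set x; y] = [set x; y].
  apply/setP => z; rewrite !inE; case: (eqVneq z x) => [->|_]; first by rewrite xS fx eqxx.
  by case: (eqVneq z y) => [->|_]; rewrite ?yS ?fy ?eqxx ?andbF.
have hsub : [set x; y] \subset exposed S f.
  by apply/subsetP => z; rewrite !inE => /orP [] /eqP ->; rewrite ?xS ?yS ?fx ?fy eqxx.
rewrite cards2 xy.
have := subset_leq_card hsub; rewrite cards2 xy => h.
by rewrite subnK.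
Qed.

Lemma maxm_indep S f x y : maxm S f -> x \in exposed S f -> y \in exposed S f -> ~~ a x y.
Proof.
move=> hm; rewrite !inE => /andP [xS /eqP fx] /andP [yS /eqP fy].
apply/negP => axy.
have xy : x != y by apply: contraTneq axy => ->; rewrite a_irr.
have [g [hg hu]] := augment (maxm_m hm) xS yS xy fx fy axy.
have := maxm_le hm hg; rewrite -hu; lia.
Qed.


Definition swf (P : {set T}) (f g : {ffun T -> T}) :=
  [ffun x => if x \in P then f x else g x].

Lemma switch S f g (P : {set T}) : matching S f -> matching S g ->
  (forall x, x \in P -> f x \in P) -> (forall x, x \in P -> g x \in P) ->
  matching S (swf P f g) /\
  ucnt S (swf P f g) = #|exposed S f :&: P| + #|exposed S g :\: P|.
Proof.
move=> hf hg fP gP.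
have gN : forall x, x \notin P -> g x \notin P.
  by move=> x; apply: contra => /gP; rewrite (m_inv hg).
have hE : forall x, swf P f g x = if x \in P then f x else g x by move=> x; rewrite ffunE.
split.
  apply/andP; split; apply/forallP => x.
  - rewrite (hE x); case xP: (x \in P).
      by rewrite hE (fP _ xP) (m_inv hf) eqxx.
    by rewrite hE (negbTE (gN _ (negbT xP))) (m_inv hg) eqxx.
  - rewrite hE; case: ifP => _ /=; apply/implyP; [exact: m_cov hf x | exact: m_cov hg x].
rewrite /ucnt -(cardsID P (exposed S (swf P f g))); congr (_ + _); apply: eq_card => x;
  rewrite !inE hE.
- by case: (x \in P); rewrite ?andbT ?andbF.
- by case: (x \in P); rewrite /= ?andbT ?andbF.
Qed.

Lemma union_match (S1 S2 : {set T}) f1 f2 : [disjoint S1 & S2] ->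
  matching S1 f1 -> matching S2 f2 ->
  matching (S1 :|: S2) (swf S1 f1 f2) /\
  ucnt (S1 :|: S2) (swf S1 f1 f2) = ucnt S1 f1 + ucnt S2 f2.
Proof.
move=> hd h1 h2.
have nS2 : forall x, x \in S1 -> x \notin S2.
  by move=> x xS1; rewrite (disjointFr hd xS1).
have h1' := m_sub h1 (subsetUl S1 S2).
have h2' := m_sub h2 (subsetUr S1 S2).
have [hm hu] := switch h1' h2' (m_fS h1) (fun x xS1 => etrans (congr1 (fun z => z \in S1) (m_out h2 (nS2 x xS1))) xS1).
split => //; rewrite hu /ucnt; congr (_ + _); apply: eq_card => x; rewrite !inE.
- by case xS1: (x \in S1); rewrite ?andbF ?andbT.
- case xS1: (x \in S1); rewrite /= ?andbF //=.
  + by rewrite (negbTE (nS2 x xS1)) (m_out h2 (nS2 x xS1)) eqxx.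
Qed.

End Matching.
Section Gallai.
Variables (T : finType) (a : rel T).
Hypotheses (a_sym : symmetric a) (a_irr : irreflexive a).

Definition rS (S : {set T}) : rel T := fun x y => [&& x \in S, y \in S & a x y].

Lemma maxm_mk (S : {set T}) f : matching a S f -> (forall g, matching a S g -> ucnt S f <= ucnt S g) ->
  maxm a S f.
Proof. by move=> hf h; rewrite /maxm hf; apply/forallP => g; apply/implyP; exact: h. Qed.

Lemma ucnt_split (S : {set T}) f (P : {set T}) : ucnt S f = #|exposed S f :&: P| + #|exposed S f :\: P|.
Proof. by rewrite /ucnt cardsID. Qed.

Lemma orbit_reach (S : {set T}) (f g : {ffun T -> T}) y t :
  maxm a S f -> maxm a S g -> f y = y -> g y != y -> g t = t ->
  (forall h : {ffun T -> T}, maxm a S h && (h t == t) ->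
      #|[set x | h x == f x]| <= #|[set x | g x == f x]|) ->
  fconnect (rho f g) y t.
Proof.
move=> fm gm fy gy gt gmax.
have hf := maxm_m fm; have hg := maxm_m gm.
have invf : involutive f by move=> x; exact: m_inv hf x.
have invg : involutive g by move=> x; exact: m_inv hg x.
apply/negPn/negP => nt.
set P := [set z | fconnect (rho f g) y z].
have fP : forall z, z \in P -> f z \in P.
  by move=> z; rewrite /P !inE => hz; exact (orbit_f invf invg fy hz).
have gP : forall z, z \in P -> g z \in P.
  by move=> z; rewrite /P !inE => hz; exact (orbit_g invf invg fy hz).
have [hm hu] := switch hf hg fP gP.
have [hm2 hu2] := switch hg hf gP fP.
have le1 := maxm_le fm hm2.
have le2 := maxm_le gm hm.
have eqh : ucnt S (swf P f g) = ucnt S g.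
  move: le1 le2; rewrite hu hu2 (ucnt_split S f P) (ucnt_split S g P); lia.
have hmax : maxm a S (swf P f g).
  apply: maxm_mk => // k hk; rewrite eqh; exact: maxm_le gm hk.
have ht : swf P f g t = t by rewrite ffunE (negbTE (_ : t \notin P)) ?inE.
have := gmax (swf P f g); rewrite hmax ht eqxx => /(_ isT).
apply/negP; rewrite -ltnNge; apply: proper_card; apply/properP; split.
- apply/subsetP => x; rewrite !inE ffunE; case: ifP => // _ _; exact: eqxx.
- exists y; rewrite !inE ?ffunE.
  + have yP : y \in P by rewrite inE connect0.
    by rewrite yP eqxx.
  + by rewrite fy.
Qed.

Lemma path_last_in (S : {set T}) u q : u \in S -> path (rS S) u q -> last u q \in S.
Proof. by elim: q u => [|s q IH] u uS //= /andP [/and3P [_ sS _] hq]; exact: IH sS hq. Qed.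

Lemma gallai_core (S : {set T}) n : forall (f : {ffun T -> T}) x0 p, size p <= n -> maxm a S f ->
  x0 \in S -> f x0 = x0 -> f (last x0 p) = last x0 p -> last x0 p != x0 ->
  path (rS S) x0 p -> exists2 t, t \in S & forall g, maxm a S g -> g t != t.
Proof.
elim: n => [|n IH] f x0 p hsz fm x0S fx0 fb bx hp.
  by case: p hsz bx {fb hp} => //= _; rewrite eqxx.
case: p hsz fb bx hp => [|t p'] /= hsz fb bx; first by rewrite eqxx in bx.
move=> /andP [/and3P [_ tS axt] hp].
set b := last t p' in fb bx hp *.
have bS : b \in S by exact: path_last_in tS hp.
have xt : x0 != t by apply: contraTneq axt => ->; rewrite a_irr.
case: (eqVneq b t) => [bt | bt].
  have := maxm_indep a_sym a_irr fm (x:=x0) (y:=t); rewrite !inE x0S tS fx0 -bt fb !eqxx /= => /(_ isT isT).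
  by rewrite bt axt.
case: (boolP [exists g : {ffun T -> T}, [&& maxm a S g, g t == t & g b == b]]) => [|hno].
  move=> /existsP [g /and3P [gm /eqP gt /eqP gb]].
  by apply: (IH g t p') => //; rewrite -ltnS.
exists t => // g gm; apply/negP => /eqP gt.
have P0 : maxm a S g && (g t == t) by rewrite gm gt eqxx.
case: (@arg_maxnP _ g (fun h : {ffun T -> T} => maxm a S h && (h t == t))
   (fun h : {ffun T -> T} => #|[set x | h x == f x]|) P0) => g' /andP [g'm /eqP g't] gmax.
have g'b : g' b != b.
  apply: contraNneq hno => gb; apply/existsP; exists g'; by rewrite g'm g't gb !eqxx.
have g'x : g' x0 != x0.
  apply/negP => /eqP gx.
  have := maxm_indep a_sym a_irr g'm (x:=x0) (y:=t); rewrite !inE x0S tS gx g't !eqxx /= => /(_ isT isT).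
  by rewrite axt.
have hf := maxm_m fm; have hg := maxm_m g'm.
have invf : involutive f by move=> x; exact: m_inv hf x.
have invg : involutive g' by move=> x; exact: m_inv hg x.
have r1 := orbit_reach fm g'm fx0 g'x g't gmax.
have r2 := orbit_reach fm g'm fb g'b g't gmax.
have r3 : fconnect (rho f g') x0 b.
  apply: connect_trans r1 _; by rewrite (fconnect_sym (rho_inj invf invg)).
have := orbit_two invf invg fx0 r3 r1 bx _ (or_introl fb) (or_intror g't).
by rewrite eq_sym in xt => /(_ xt) bt'; rewrite bt' eqxx in bt.
Qed.

Lemma gallai (S : {set T}) f : maxm a S f ->
  (forall x y, x \in S -> y \in S -> connect (rS S) x y) ->
  (forall v, v \in S -> exists g, maxm a S g /\ g v = v) -> ucnt S f <= 1.
Proof.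
move=> fm hc hv; rewrite leqNgt; apply/negP => h2.
have [x0 [b [x0E bE bx]]] : exists x0 b, [/\ x0 \in exposed S f, b \in exposed S f & b != x0].
  move: h2; rewrite /ucnt => /card_gt1P [x0 [b [hx hb hxb]]].
  by exists x0, b; split => //; rewrite eq_sym.
move: x0E bE; rewrite !inE => /andP [x0S /eqP fx0] /andP [bS /eqP fb].
have /connectP [p hp hl] := hc x0 b x0S bS.
have fb' : f (last x0 p) = last x0 p by rewrite -hl.
have bx' : last x0 p != x0 by rewrite -hl.
have [t tS ht] := gallai_core (leqnn (size p)) fm x0S fx0 fb' bx' hp.
have [g [gm gt]] := hv t tS.
by have := ht g gm; rewrite gt eqxx.
Qed.

End Gallai.

Section RLemma.
Variables (T : finType) (a : rel T).
Hypotheses (a_sym : symmetric a) (a_irr : irreflexive a).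

Definition degS (S : {set T}) w := #|[set y in S | a w y]|.
Definition indep (I : {set T}) := [forall x in I, forall y in I, ~~ a x y].
Definition trifree (S : {set T}) := forall x y z, x \in S -> y \in S -> z \in S ->
  a x y -> a x z -> ~~ a y z.

Lemma indepP (I : {set T}) : (forall x y, x \in I -> y \in I -> ~~ a x y) -> indep I.
Proof.
move=> h; apply/forallP => x; apply/implyP => xI; apply/forallP => y; apply/implyP => yI.
exact: h.
Qed.

Lemma arith1 d : 2 * 1 + d.+2 <= 2 * d.+2.
Proof. lia. Qed.

Lemma parity_gap x y : x <= y -> odd x = odd y -> x != y -> x + 2 <= y.
Proof.
move=> le od ne.
have : odd (y - x) = false by rewrite oddB // od addbb.
have : y - x != 0 by rewrite subn_eq0 -ltnNge ltn_neqAle ne le.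
case: (y - x) (subnK le) => [|[|k]] //= h _ _; lia.
Qed.

Lemma exposed_ext (S : {set T}) v f : v \in S -> matching a (S :\ v) f ->
  ucnt S f = (ucnt (S :\ v) f).+1.
Proof.
move=> vS hf.
have fv : f v = v by apply: (m_out hf); rewrite !inE eqxx.
rewrite /ucnt (cardsD1 v (exposed S f)) !inE vS fv eqxx /= add1n; congr (_.+1).
by apply: eq_card => x; rewrite !inE andbA.
Qed.

Lemma R_aux n : forall S : {set T}, #|S| <= n -> S != set0 -> trifree S ->
  exists f w (I : {set T}), [/\ matching a S f, w \in S, I \subset S, indep I &
     2 * ucnt S f + degS S w <= 2 * #|I|].
Proof.
elim: n => [|n IH] S hS hne htf.
  by move: hne; rewrite -card_gt0; case: #|S| hS.
have [f0 f0m] := exists_max a S.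
have f0M := maxm_m f0m.
case: (boolP [exists S1 : {set T}, [&& S1 != set0, S1 \proper S &
   [forall x in S1, forall y in S :\: S1, ~~ a x y]]]).
  move=> /existsP [S1 /and3P [n1 p1 /forallP c1]].
  have s1 := proper_sub p1.
  set S2 := S :\: S1.
  have c1' : forall x y, x \in S1 -> y \in S2 -> ~~ a x y.
    by move=> x y xS1 yS2; have := c1 x; rewrite xS1 => /forallP /(_ y); rewrite yS2.
  have tf1 : trifree S1.
    move=> x y z xS yS zS; apply: htf; exact: (subsetP s1).
  have hS1 : #|S1| <= n by move: (proper_card p1) hS; lia.
  have [f1 [w1 [I1 [m1 w1S I1s i1 ineq1]]]] := IH S1 hS1 n1 tf1.
  have [f2 f2m] := exists_max a S2.
  have m2 := maxm_m f2m.
  have hd : [disjoint S1 & S2] by rewrite disjoints_subset; apply/subsetP => x xS1; rewrite /S2 !inE xS1.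
  have [mU uU] := union_match hd m1 m2.
  have eS : S1 :|: S2 = S.
    by apply/setP => x; rewrite !inE; case: (boolP (x \in S1)) => // /(subsetP s1) ->.
  rewrite eS in mU uU.
  set I2 := exposed S2 f2.
  have I2s : I2 \subset S2 by apply/subsetP => x; rewrite inE => /andP [].
  exists (swf S1 f1 f2), w1, (I1 :|: I2); split => //.
  - exact: (subsetP s1).
  - by rewrite -eS setUSS.
  - apply: indepP => x y; rewrite !in_setU => /orP [xI|xI] /orP [yI|yI].
    + by move/forallP: i1 => /(_ x); rewrite xI => /forallP /(_ y); rewrite yI.
    + exact: (c1' x y (subsetP I1s _ xI) (subsetP I2s _ yI)).
    + rewrite a_sym; exact: (c1' y x (subsetP I1s _ yI) (subsetP I2s _ xI)).
    + exact (maxm_indep a_sym a_irr f2m xI yI).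
  - rewrite uU.
    have hdeg : degS S w1 = degS S1 w1.
      rewrite /degS; apply: eq_card => y; rewrite !inE.
      case: (boolP (y \in S1)) => [/(subsetP s1) -> //| yS1].
      case yS: (y \in S) => //=; apply/negbTE.
      by apply: c1' => //; rewrite /S2 !inE yS1 yS.
    have hI : #|I1 :|: I2| = #|I1| + #|I2|.
      apply/eqP; rewrite eqn_leq cardsU; apply/andP; split; first by rewrite leq_subr.
      suff -> : I1 :&: I2 = set0 by rewrite cards0 subn0.
      apply/setP => x; rewrite in_setI in_set0; apply/negP => /andP [xI1 xI2].
      have := subsetP I1s _ xI1; have := subsetP I2s _ xI2.
      by rewrite /S2 !inE => /andP [/negbTE ->].
    rewrite hdeg hI; move: ineq1; rewrite /ucnt -/I2.
    move: (#|exposed S1 f1|) (degS S1 w1) (#|I1|) (#|I2|) => p q r s'; clear; lia.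
move=> hnc.
case: (boolP [exists v in S, [forall g : {ffun T -> T}, maxm a S g ==> (g v != v)]]).
  move=> /existsP [v /andP [vS /forallP hv]].
  set S' := S :\ v.
  have hS' : #|S'| <= n by move: hS; rewrite /S' (cardsD1 v S) vS add1n ltnS.
  have ne' : S' != set0.
    apply/set0Pn; have := hv f0; rewrite f0m /= => fv.
    exists (f0 v); rewrite !inE (m_inS f0M fv) andbT.
    by apply: contra fv => /eqP ->.
  have tf' : trifree S'.
    move=> x y z; rewrite /S' !inE => /andP [_ xS] /andP [_ yS] /andP [_ zS]; exact: htf.
  have [f' [w' [I' [m' w'S I's i' ineq']]]] := IH S' hS' ne' tf'.
  have sS' : S' \subset S by apply/subsetP => x; rewrite inE => /andP [].
  have mS := m_sub m' sS'.
  have ue := exposed_ext vS m'.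
  have hle := maxm_le f0m mS.
  have hpar : odd (ucnt S f0) = odd (ucnt S f') by rewrite !(parity f0M) (parity mS).
  have hne2 : ucnt S f0 != ucnt S f'.
    apply/negP => /eqP heq.
    have mM : maxm a S f'.
      by apply: maxm_mk => // g hg; rewrite -heq; exact: maxm_le f0m hg.
    have := hv f'; rewrite mM /= (m_out m') ?eqxx //; by rewrite !inE eqxx.
  have gap := parity_gap hle hpar hne2.
  have hdeg : degS S w' <= (degS S' w').+1.
    rewrite /degS (cardsD1 v [set y in S | a w' y]) -add1n; apply: leq_add; first by case: (_ \in _).
    apply: subset_leq_card; apply/subsetP => y; rewrite !inE andbA => /andP [/andP [yv yS] ay].
    by rewrite yv yS ay.
  exists f0, w', I'; split => //.
  - exact: (subsetP sS').
  - exact: subset_trans I's sS'.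
  - move: ineq' gap hdeg; rewrite ue.
    move: (ucnt S' f') (ucnt S f0) (degS S w') (degS S' w') (#|I'|) => p q r s' t; clear; lia.
move=> hnv.
have hconn : forall x y, x \in S -> y \in S -> connect (rS a S) x y.
  move=> x y xS yS; apply/negPn/negP => nxy.
  move/negP: hnc; apply; apply/existsP.
  exists [set z in S | connect (rS a S) x z]; apply/and3P; split.
  - by apply/set0Pn; exists x; rewrite inE xS connect0.
  - apply/properP; split; first by apply/subsetP => z; rewrite inE => /andP [].
    by exists y => //; rewrite inE yS.
  - apply/forallP => u; apply/implyP; rewrite inE => /andP [uS cu].
    apply/forallP => z; apply/implyP; rewrite !inE => /andP [nz zS].
    apply/negP => auz; move: nz; rewrite zS /=; apply/negP/negPn.
    apply: connect_trans cu _; apply: connect1; by rewrite /rS uS zS auz.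
have hmiss : forall v, v \in S -> exists g, maxm a S g /\ g v = v.
  move=> v vS; move: hnv => /existsPn /(_ v); rewrite vS /= => /forallPn [g].
  by rewrite negb_imply negbK => /andP [gm /eqP gv]; exists g.
have u1 := gallai a_sym a_irr f0m hconn hmiss.
have [x0 x0S] : exists x0, x0 \in S by apply/set0Pn.
case: (@arg_minnP _ x0 (fun w => w \in S) (degS S) x0S) => w wS wmin.
set N := [set y in S | a w y].
have Ni : indep N.
  apply: indepP => y z; rewrite !inE => /andP [yS wy] /andP [zS wz].
  exact: htf wS yS zS wy wz.
have Ns : N \subset S by apply/subsetP => y; rewrite inE => /andP [].
have [u0|u1'] : ucnt S f0 = 0 \/ ucnt S f0 = 1.
  by move: u1; case: (ucnt S f0) => [|[|]]; auto.
  by exists f0, w, N; split => //; rewrite u0 /degS -/N muln0 add0n mul2n -addnn leq_addl.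
have hodd : odd #|S| by rewrite -(parity f0M) u1'.
have eN : #|N| = degS S w by [].
case hd: (degS S w) => [|[|d]].
- exists f0, w, [set w]; split => //.
  + by rewrite sub1set.
  + by apply: indepP => y z; rewrite !inE => /eqP -> /eqP ->; rewrite a_irr.
  + by rewrite u1' cards1 hd.
- have hN1 : #|N| == 1 by rewrite eN hd.
  move/cards1P: hN1 => [y Ny].
  have yN : y \in N by rewrite Ny inE.
  move: (yN); rewrite inE => /andP [yS wy].
  have wy' : w != y by apply: contraTneq wy => ->; rewrite a_irr.
  have h2 : 1 < #|S| by apply/card_gt1P; exists w, y.
  have h3 : 2 < #|S| by move: h2 hodd; case: #|S| => [|[|[|k]]].
  have [z [zS zw zy]] : exists z, [/\ z \in S, z != w & z != y].
    have : ~~ (S \subset [set w; y]).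
      apply/negP => /subset_leq_card; rewrite cards2 wy' => h4.
      by move: h3; rewrite ltnNge h4.
    case/subsetPn => z zS; rewrite !inE negb_or => /andP [zw zy]; by exists z.
  have nwz : ~~ a w z.
    apply/negP => wz; have : z \in N by rewrite inE zS wz.
    by rewrite Ny inE (negbTE zy).
  exists f0, w, [set w; z]; split => //.
  + by apply/subsetP => u; rewrite !inE => /orP [] /eqP ->.
  + apply: indepP => u v; rewrite !inE => /orP [] /eqP -> /orP [] /eqP ->;
      rewrite ?a_irr //; rewrite ?(a_sym z w); exact: nwz.
  + by rewrite u1' hd cards2 eq_sym zw.
- exists f0, w, N; split => //.
  by rewrite u1' eN hd; apply: arith1.
Qed.

End RLemma.


Section Bridge.
Variables (T : finType) (e : rel T).
Hypothesis T0 : (0 < #|T|)%N.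
Hypothesis e_irr : irreflexive e.
Hypothesis e_sym : symmetric e.

Definition ordT (i : nat) : 'I_#|T| := insubd (Ordinal T0) i.
Lemma ordTE i : (i < #|T|)%N -> nat_of_ord (ordT i) = i.
Proof. by move=> h; rewrite /ordT val_insubd h. Qed.

Lemma bigmin_leq (I : finType) (P : pred I) (F : I -> nat) x j :
  P j -> (\big[minn/x]_(i | P i) F i <= F j)%N.
Proof.
move=> Pj; rewrite -big_filter.
have : j \in [seq i <- index_enum I | P i] by rewrite mem_filter Pj mem_index_enum.
elim: [seq _ <- _ | _] => // a s IH; rewrite inE big_cons => /orP [/eqP -> | /IH h].
  exact: geq_minl.
exact: leq_trans (geq_minr _ _) h.
Qed.

Lemma chi_le (S : {set T}) (c : T -> nat) (k : nat) :
  (forall x, x \in S -> (c x < k)%N) ->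
  (forall x y, x \in S -> y \in S -> e x y -> c x != c y) ->
  (chi_on e S <= k)%N.
Proof.
move=> hk hp.
have hT : (chi_on e S <= #|T|)%N.
  rewrite /chi_on; apply: (big_ind (fun m => m <= #|T|)%N).
  - by [].
  - move=> x y hx hy; exact: leq_trans (geq_minl _ _) hx.
  - by move=> i _; rewrite -ltnS.
case: (leqP k #|T|) => hkT; last by apply: leq_trans hT (ltnW hkT).
have hc : colorable_on e S k.
  apply/existsP; exists [ffun x => ordT (c x)]; apply/andP; split.
  - apply/forallP => x; apply/implyP => xS; rewrite ffunE ordTE ?hk //.
    exact: leq_trans (hk x xS) hkT.
  - apply/forallP => x; apply/implyP => xS; apply/forallP => y; apply/implyP => yS.
    apply/implyP => exy; rewrite !ffunE.
    apply/negP => /eqP/(congr1 val) /=.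
    rewrite !ordTE; first by apply/eqP; exact: hp.
    + exact: leq_trans (hk y yS) hkT.
    + exact: leq_trans (hk x xS) hkT.
have hk1 : (k < #|T|.+1)%N by [].
rewrite /chi_on.
exact: (@bigmin_leq _ (fun i : 'I_#|T|.+1 => colorable_on e S i) (fun i => nat_of_ord i) #|T| (Ordinal hk1) hc).
Qed.

Lemma colorable_T (S : {set T}) : colorable_on e S #|T|.
Proof.
apply/existsP; exists [ffun x => enum_rank x]; apply/andP; split.
- by apply/forallP => x; apply/implyP => _; rewrite ffunE.
- apply/forallP => x; apply/implyP => _; apply/forallP => y; apply/implyP => _.
  apply/implyP => exy; rewrite !ffunE.
  apply/negP => /eqP /enum_rank_inj exy'; by rewrite exy' e_irr in exy.
Qed.

Lemma chi_colorable (S : {set T}) : colorable_on e S (chi_on e S).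
Proof.
rewrite /chi_on; apply: (big_ind (colorable_on e S)).
- exact: colorable_T.
- move=> x y hx hy; rewrite /minn; by case: ifP.
- by [].
Qed.

Lemma chi_col (S : {set T}) : exists c : T -> nat,
  (forall x, x \in S -> (c x < chi_on e S)%N) /\
  (forall x y, x \in S -> y \in S -> e x y -> c x != c y).
Proof.
have /existsP [f /andP [/forallP h1 /forallP h2]] := chi_colorable S.
exists (fun x => nat_of_ord (f x)); split.
- by move=> x xS; have := h1 x; rewrite xS.
- move=> x y xS yS exy; have := h2 x; rewrite xS /= => /forallP /(_ y).
  by rewrite yS exy.
Qed.

End Bridge.

Section Bridge2.
Variables (T : finType) (e : rel T).
Hypothesis T0 : (0 < #|T|)%N.

Definition vl (S : {set T}) : int := (#|S|%:Z - 3 * (chi_on e S)%:Z)%R.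

Lemma omega_ge K : is_clique e K -> (#|K| <= omega e)%N.
Proof. by move=> h; rewrite /omega (leq_bigmax_cond _ h). Qed.

Lemma Delta_ge x : (deg e x <= Delta e)%N.
Proof. by rewrite /Delta (leq_bigmax x). Qed.

Lemma eta_ge S : S != set0 -> (vl S <= eta e)%R.
Proof.
move=> hS; rewrite /eta.
exact: (Order.TotalTheory.le_bigmax_cond _ (fun S : {set T} => (#|S|%:Z - 3 * (chi_on e S)%:Z)%R) hS).
Qed.

Lemma eta_attained : exists S, S != set0 /\ eta e = vl S.
Proof.
rewrite /eta; apply: (big_ind (fun m : int => exists S, S != set0 /\ m = vl S)).
- exists setT; split; last by rewrite /vl cardsT.
  apply/negP => /eqP h; move: T0; by rewrite -cardsT h cards0.
- move=> x y [Sx [hx ->]] [Sy [hy ->]].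
  case: (Order.TotalTheory.leP (vl Sx) (vl Sy)) => _.
  + by exists Sy.
  + by exists Sx.
- by move=> S hS; exists S.
Qed.

End Bridge2.

Section Main.
Variables (T : finType) (e : rel T).
Hypotheses (e_sym : symmetric e) (e_irr : irreflexive e) (T0 : 0 < #|T|).

Definition na : rel T := fun x y => (x != y) && ~~ e x y.
Lemma na_sym : symmetric na.
Proof. by move=> x y; rewrite /na eq_sym e_sym. Qed.
Lemma na_irr : irreflexive na.
Proof. by move=> x; rewrite /na eqxx. Qed.

Lemma arith2 u p i om F d dg s :
  2 * u + dg <= 2 * i -> i <= om -> F = u + 2 * p -> F = d + s -> s = dg.+1 ->
  4 * (u + p) <= 2 * om + F + 1 + d.
Proof. lia. Qed.

Lemma Qlemma (F : {set T}) : F != set0 ->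
  (forall x y z, x \in F -> y \in F -> z \in F -> x != y -> x != z -> y != z ->
     [|| e x y, e x z | e y z]) ->
  exists2 w, w \in F & 4 * chi_on e F <= 2 * omega e + #|F| + 1 + #|[set y in F | e w y]|.
Proof.
move=> hne hno.
have htf : trifree na F.
  move=> x y z xF yF zF /andP [xy nxy] /andP [xz nxz]; rewrite /na negb_and negbK.
  case: (eqVneq y z) => [//|yz] /=.
  rewrite negbK; have := hno x y z xF yF zF xy xz yz.
  by rewrite (negbTE nxy) (negbTE nxz).
have [f [w [I [hf wF IF iI ineq]]]] := R_aux na_sym na_irr (leqnn #|F|) hne htf.
exists w => //.
have hcl : is_clique e I.
  apply/forallP => x; apply/implyP => xI; apply/forallP => y; apply/implyP => yI.
  apply/implyP => xy.
  by move/forallP: iI => /(_ x); rewrite xI => /forallP /(_ y); rewrite yI /na xy negbK.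
have hom := omega_ge hcl.
have [c [hc1 hc2]] := color_of_matching hf.
have hchi : chi_on e F <= ucnt F f + #|prep F f|.
  apply: (chi_le T0 (c := c)); first exact: hc1.
  move=> x y xF yF exy; apply/eqP => cxy.
  case: (hc2 x y xF yF cxy) => [xy|yfx]; first by rewrite xy e_irr in exy.
  have fx : f x != x by rewrite -yfx; apply: contraTneq exy => ->; rewrite e_irr.
  by move: (m_adj hf fx); rewrite -yfx /na exy andbF.
have hcount := count_pairs hf.
have h1 : #|F| = #|[set y in F | e w y]| + #|[set y in F | ~~ e w y]|.
  rewrite -(cardsID [set y | e w y] F); congr (_ + _); apply: eq_card => y;
    by rewrite !inE andbC.
have h2 : #|[set y in F | ~~ e w y]| = (degS na F w).+1.
  rewrite (cardsD1 w) !inE wF e_irr /= add1n; congr (_.+1).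
  apply: eq_card => y; rewrite !inE /na.
  by case: (y \in F); rewrite ?andbF ?andbT // eq_sym.
apply: leq_trans (_ : 4 * (ucnt F f + #|prep F f|) <= _).
  by rewrite leq_mul2l hchi orbT.
exact: arith2 ineq hom hcount h1 h2.
Qed.

Lemma greedy n (S : {set T}) : #|S| <= n ->
  exists c : T -> nat, (forall x, x \in S -> c x <= Delta e) /\
    (forall x y, x \in S -> y \in S -> e x y -> c x != c y).
Proof.
elim: n S => [|n IH] S hS.
  exists (fun _ => 0); split => // x y xS; move: hS; rewrite leqn0 => /eqP /cards0_eq S0.
  by rewrite S0 inE in xS.
case: (set_0Vmem S) => [->|[v vS]].
  by exists (fun _ => 0); split => // x y; rewrite inE.
have hS' : #|S :\ v| <= n by move: hS; rewrite (cardsD1 v S) vS add1n ltnS.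
have [c' [hc1 hc2]] := IH _ hS'.
set U := [seq c' y | y <- enum [set y in S :\ v | e v y]].
have hU : size U <= Delta e.
  rewrite size_map -cardE; apply: leq_trans (Delta_ge e v).
  by apply: subset_leq_card; apply/subsetP => y; rewrite !inE => /andP [_ ->].
have [j jD jU] : exists2 j, j <= Delta e & j \notin U.
  have : ~~ all (fun j => j \in U) (iota 0 (Delta e).+1).
    apply/negP => /allP hall.
    have := uniq_leq_size (iota_uniq 0 (Delta e).+1) hall; rewrite size_iota => h.
    by move: (leq_trans h hU); rewrite ltnn.
  by case/allPn => j; rewrite mem_iota add0n => /andP [_ jlt] jU; exists j.
exists (fun x => if x == v then j else c' x); split.
  move=> x xS; case: eqP => // /eqP xv; apply: hc1; by rewrite !inE xv.
move=> x y xS yS exy.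
have cU : forall y, y \in S -> y != v -> e v y -> c' y \in U.
  move=> z zS zv ezv; apply/mapP; exists z => //; by rewrite mem_enum !inE zv zS.
case: (eqVneq x v) => [xv|xv]; case: (eqVneq y v) => [yv|yv].
- by rewrite xv yv e_irr in exy.
- rewrite xv in exy; apply/negP => /eqP hj; rewrite hj in jU.
  by rewrite (cU y yS yv exy) in jU.
- rewrite yv e_sym in exy; apply/negP => /eqP hj; rewrite -hj in jU.
  by rewrite (cU x xS xv exy) in jU.
- by apply: hc2 => //; rewrite !inE ?xv ?yv.
Qed.

Lemma chi_delta (S : {set T}) : chi_on e S <= (Delta e).+1.
Proof.
have [c [h1 h2]] := greedy (leqnn #|S|).
by apply: (chi_le T0 (c := c)) => // x xS; rewrite ltnS h1.
Qed.

End Main.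


Section Main2.
Variables (T : finType) (e : rel T).
Hypotheses (e_sym : symmetric e) (e_irr : irreflexive e) (T0 : 0 < #|T|).

Lemma vl_leP (S1 S2 : {set T}) :
  (vl e S1 <= vl e S2)%R = (#|S1| + 3 * chi_on e S2 <= #|S2| + 3 * chi_on e S1).
Proof.
rewrite /vl; apply/idP/idP; lia.
Qed.


Lemma arith3 a b om D g i j n kk hh : 4 * b <= 2 * om + j + 1 + i -> a <= kk + b ->
  n = hh + j -> kk + i <= g -> g <= D -> 4 * a + hh <= 2 * om + D + 1 + n + 3 * kk.
Proof. lia. Qed.

Lemma arith4 a om D n kk hh : a = kk -> kk <= D.+1 -> hh = n ->
  4 * a + hh <= 2 * om + D + 1 + n + 3 * kk.
Proof. lia. Qed.

Lemma main_nat : exists H : {set T}, [/\ H != set0, eta e = vl e H &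
  4 * chi e + #|H| <= 2 * omega e + Delta e + 1 + #|T| + 3 * chi_on e H].
Proof.
have [S0 [hS0 eS0]] := eta_attained e T0.
have P0 : (S0 != set0) && (vl e S0 == eta e) by rewrite hS0 eS0 eqxx.
case: (@arg_maxnP _ S0 (fun S => (S != set0) && (vl e S == eta e)) (fun S => #|S|) P0)
  => H /andP [hH /eqP eH] Hmax.
exists H; split => //.
set k := chi_on e H.
set h := #|H|.
have [c [hc1 hc2]] := chi_col e_irr H.
set F := ~: H.
have HF : forall x, x \in F -> x \notin H by move=> x; rewrite inE.
have K1 : forall w, w \in F -> forall j, j < k -> exists2 x, x \in H & e w x && (c x == j).
  move=> w wF j jk.
  case: (boolP [exists x in H, e w x && (c x == j)]) => [/exists_inP [x xH hx]|hn].
    by exists x.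
  exfalso.
  pose c' y := if y == w then j else c y.
  have hchi : chi_on e (w |: H) <= k.
    apply: (chi_le T0 (c := c')).
      by move=> y; rewrite !inE /c'; case: eqP => // _ /= yH; apply: hc1.
    move=> y z; rewrite !inE /c' => hy hz eyz.
    case: (eqVneq y w) => [yw|yw]; case: (eqVneq z w) => [zw|zw] /=.
    - by rewrite yw zw e_irr in eyz.
    - move: hz; rewrite (negbTE zw) /= => zH; apply/negP => /eqP hj.
      move/exists_inP: hn; apply; exists z => //; by rewrite -yw eyz hj eqxx.
    - move: hy; rewrite (negbTE yw) /= => yH; apply/negP => /eqP hj.
      move/exists_inP: hn; apply; exists y => //; by rewrite -zw e_sym eyz hj eqxx.
    - move: hy hz; rewrite (negbTE yw) (negbTE zw) /= => yH zH; exact: hc2.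
  have hne : w |: H != set0 by apply/set0Pn; exists w; rewrite !inE eqxx.
  have := eta_ge e hne; rewrite -eH vl_leP cardsU1 (negbTE (HF w wF)).
  move: hchi; rewrite -/k -/h.
  move: (chi_on e (w |: H)) => ch; clear; lia.
have K2 : forall w, w \in F -> k + #|[set y in F | e w y]| <= deg e w.
  move=> w wF.
  set A := [set y in H | e w y].
  have hA : k <= #|A|.
    pose g (j : 'I_k) := odflt w [pick x in A | c x == j].
    have gP : forall j : 'I_k, g j \in A /\ c (g j) = j.
      move=> j; rewrite /g; case: pickP => [x /andP [xA /eqP cx] | hn] //=.
      have [x xH hx] := K1 w wF j (ltn_ord j).
      move/andP: hx => [ewx cx].
      by move: (hn x); rewrite !inE xH ewx cx.
    have ginj : injective g.
      move=> i j hij; apply/val_inj => /=.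
      by rewrite -(proj2 (gP i)) hij (proj2 (gP j)).
    rewrite -[k]card_ord -(card_imset _ ginj); apply: subset_leq_card.
    by apply/subsetP => x /imsetP [j _ ->]; case: (gP j).
  rewrite /deg; apply: leq_trans (_ : #|A :|: [set y in F | e w y]| <= _).
    rewrite cardsU.
    suff -> : A :&: [set y in F | e w y] = set0 by rewrite cards0 subn0 leq_add2r.
    apply/setP => x; rewrite !inE; by case: (x \in H); rewrite ?andbF.
  by apply: subset_leq_card; apply/subsetP => x; rewrite !inE => /orP [] /andP [].
have K3 : forall x y z, x \in F -> y \in F -> z \in F -> x != y -> x != z -> y != z ->
    [|| e x y, e x z | e y z].
  move=> x y z xF yF zF xy xz yz.
  case: (boolP [|| e x y, e x z | e y z]) => // /norP [nxy /norP [nxz nyz]].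
  exfalso.
  have nadj : forall u v, u \in [set x; y; z] -> v \in [set x; y; z] -> ~~ e u v.
    move=> u v; rewrite !inE => hu' hv'.
    move: hu' hv' => /orP [/orP [/eqP ->|/eqP ->]|/eqP ->] /orP [/orP [/eqP ->|/eqP ->]|/eqP ->];
      rewrite ?e_irr // ?(e_sym y x) ?(e_sym z x) ?(e_sym z y) //.
  set S' := [set x; y; z] :|: H.
  pose c' v := if v \in H then c v else k.
  have hchi : chi_on e S' <= k.+1.
    apply: (chi_le T0 (c := c')).
      move=> v _; rewrite /c'; case: ifP => [vH|_] //; exact: ltnW (hc1 v vH).
    move=> u v; rewrite /S' !inE /c' => hu hv euv.
    case: ifP => uH; case: ifP => vH.
    - exact: hc2.
    - by rewrite neq_ltn hc1.
    - by rewrite neq_ltn hc1 ?orbT.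
    - exfalso; move: hu hv; rewrite uH vH !orbF => hu hv.
      have hu' : u \in [set x; y; z] by rewrite !inE.
      have hv' : v \in [set x; y; z] by rewrite !inE.
      by move: (nadj u v hu' hv'); rewrite euv.
  have hcard : #|S'| = h + 3.
    rewrite /S' cardsU.
    have -> : [set x; y; z] :&: H = set0.
      apply/setP => v; rewrite !inE.
      apply/negP => /andP [hv vH].
      move: hv => /orP [/orP [/eqP hv|/eqP hv]|/eqP hv]; subst v;
        [move: (HF x xF)| move: (HF y yF)| move: (HF z zF)]; by rewrite vH.
    rewrite cards0 subn0 addnC; congr (_ + _).
    rewrite -setUA cardsU1 !inE negb_or xy xz /= cards2 yz; by [].
  have hne : S' != set0 by apply/set0Pn; exists x; rewrite !inE eqxx.
  have hval : vl e S' == eta e.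
    rewrite Order.POrderTheory.eq_le eta_ge // /= -eH vl_leP hcard -/k -/h.
    move: hchi; move: (chi_on e S') => ch; clear; lia.
  have := Hmax S'; rewrite hne hval hcard => /(_ isT).
  by rewrite -/h; lia.
have [cF [hcF1 hcF2]] := chi_col e_irr F.
have K4 : chi e <= k + chi_on e F.
  rewrite /chi.
  apply: (chi_le T0 (c := fun v => if v \in H then c v else k + cF v)).
    move=> v _; case: ifP => vH; first by apply: leq_trans (hc1 v vH) (leq_addr _ _).
    by rewrite ltn_add2l; apply: hcF1; rewrite inE vH.
  move=> u v _ _ euv; case: ifP => uH; case: ifP => vH.
  - exact: hc2.
  - by rewrite neq_ltn (leq_trans (hc1 u uH) (leq_addr _ _)).
  - by rewrite neq_ltn (leq_trans (hc1 v vH) (leq_addr _ _)) orbT.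
  - by rewrite eqn_add2l; apply: hcF2; rewrite ?inE ?uH ?vH.
have hT : #|T| = h + #|F| by rewrite /F cardsC.
case: (eqVneq F set0) => [F0|Fne].
  have HT : H = setT by apply/setP => x; move/setP: F0 => /(_ x); rewrite !inE; case: (x \in H).
  have hchi : chi e = k by rewrite /chi /k HT.
  have hd := chi_delta e_sym e_irr T0 H.
  have hhT : h = #|T| by rewrite /h HT cardsT.
  exact: arith4 hchi hd hhT.
have [w wF hQ] := Qlemma e_sym e_irr T0 Fne K3.
exact: arith3 hQ K4 hT (K2 w wF) (Delta_ge e w).
Qed.

End Main2.

Local Open Scope ring_scope.

Theorem corollary11 (T : finType) (e : rel T)
  (e_sym : symmetric e) (e_irr : irreflexive e) (T_nonempty : (0 < #|T|)%N)
  : (chi e)%:R <=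
      (1 / 2 : rat) * ((omega e)%:R + ((Delta e)%:R + 1 + (#|T|)%:R) / 2)
      - (eta e)%:~R / 4.
Proof.
have [H [hH eH hin]] := main_nat e_sym e_irr T_nonempty.
rewrite eH /vl.
have hq : ((4 * chi e + #|H|)%N%:R <= (2 * omega e + Delta e + 1 + #|T| + 3 * chi_on e H)%N%:R :> rat).
  by rewrite ler_nat.
rewrite !natrD in hq.
have -> : ((#|H|%:Z - 3 * (chi_on e H)%:Z)%:~R : rat) = #|H|%:R - 3 * (chi_on e H)%:R.
  by rewrite rmorphB rmorphM /=.
move: hq; set a := (chi e)%:R; set b := (omega e)%:R; set d := (Delta e)%:R.
set n := (#|T|)%:R; set hh := (#|H|)%:R; set k := (chi_on e H)%:R.
move=> hq; lra.
Qed.
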